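(* Let $n\ge2$, let $w = l_1\cdots l_k$ be a word in $\mathbb{F}_n^+$ of length $k\ge2$, let $0\le\delta<1$, and let $z_1,\dots,z_{k+1}\in\delta{\mathbb{B}}_n$, $z_i = (z_{i1},\dots,z_{in})$. Let $\rho_{Z,w}$ be the completely contractive representation of ${\mathfrak{A}}_n\times_\phi{\mathbb{Z}}^+$ into $(k+1)\times(k+1)$ matrices determined by $\rho_{Z,w}(U)=0$ and \[ \rho_{Z,w}(S_j) = \operatorname{diag}(z_{ij})_{i=1}^{k+1} + (1-\delta)\sum_{i:\, l_i = j} E_{i,i+1},\qquad 1\le j\le n. \] Then $\rho_{Z,w}(S_w)_{1,k+1} = (1-\delta)^k$ and $\rho_{Z,w}(S_v)_{1,k+1} = 0$ for all other words $v$ with $|v|\le k$. For each word $v$ with $|v|>k$ there is an analytic function $F_v$ on $(\delta{\mathbb{B}}_n)^{k+1}$ with $F_v(0)=0$ such that $\rho_{Z,w}(S_v)_{1,k+1} = F_v(z_1,\dots,z_{k+1})$ for all such choices of $z_1,\dots,z_{k+1}$. Moreover, if the coordinates $\{z_{ij}: 1\le i\le k+1,\ 1\le j\le n\}$ are all distinct, then the range of $\rho_{Z,w}$ is all of ${\mathfrak{T}}_{k+1}$, so that $\rho_{Z,w}\in{\mathcal{N}}_{Z,k+1}$.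
   Context: ${\mathfrak{A}}_n$ is the non-commutative disc algebra generated by the left creation operators $S_1,\dots,S_n$ on full Fock space; for a word $v = j_1\cdots j_m\in\mathbb{F}_n^+$ (free semigroup on $n$ letters) $S_v = S_{j_1}\cdots S_{j_m}$. $\phi$ is an isometric automorphism of ${\mathfrak{A}}_n$ and ${\mathfrak{A}}_n\times_\phi{\mathbb{Z}}^+$ is the universal operator algebra generated by ${\mathfrak{A}}_n$ and a contraction $U$ with $AU=U\phi(A)$; since the row $[\rho_{Z,w}(S_1)\ \cdots\ \rho_{Z,w}(S_n)]$ has norm $<1$, the formulas determine a completely contractive representation. $E_{i,i+1}$ are matrix units and ${\mathfrak{T}}_{k+1}$ is the algebra of upper triangular $(k+1)\times(k+1)$ matrices. For $z\in{\mathbb{B}}_n$, $\theta_{z,0}$ is the character of ${\mathfrak{A}}_n\times_\phi{\mathbb{Z}}^+$ with $\theta_{z,0}(S_i) = z_i$ and $\theta_{z,0}(U)=0$. A nest representation of size $m$ is a representation onto ${\mathfrak{T}}_m$, with diagonal characters $\theta_{\pi,i}(A)=\langle\pi(A)\xi_i,\xi_i\rangle$; for $Z=(z_1,z_2,\dots)$, ${\mathcal{N}}_{Z,m}$ is the set of $m\times m$ nest representations $\pi$ with $\theta_{\pi,i}=\theta_{z_i,0}$, $1\le i\le m$. *)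

(* Defs.v *)
From HB Require Import structures.
From mathcomp Require Import all_boot all_order all_algebra.
From mathcomp Require Import mpoly.
Set Implicit Arguments. Unset Strict Implicit. Unset Printing Implicit Defensive.
Import Order.TTheory GRing.Theory Num.Theory.
Local Open Scope ring_scope.

(* Words in F_n^+ : sequences of letters in 'I_n (letter j+1 of the paper is j).
   Points z_1..z_{k+1} : rows of a matrix Z : 'M_(k.+1, n), Z i j = z_{i+1, j+1}.
   Matrix indices 1..k+1 of the paper are 0..k here. *)

Definition rhoS (C : numClosedFieldType) (n k : nat) (Z : 'M[C]_(k.+1, n))
  (delta : C) (w : seq 'I_n) (j : 'I_n) : 'M[C]_k.+1 :=
  \matrix_(a, b)
    ((if a == b then Z a j else 0) +
     (if (nat_of_ord b == (nat_of_ord a).+1) && (nth j w a == j)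
      then 1 - delta else 0)).

Definition rhoSw (C : numClosedFieldType) (n k : nat) (Z : 'M[C]_(k.+1, n))
  (delta : C) (w : seq 'I_n) (v : seq 'I_n) : 'M[C]_k.+1 :=
  \prod_(j <- v) rhoS Z delta w j.

Definition in_dball (C : numClosedFieldType) (n : nat) (delta : C)
  (z : 'rV[C]_n) : Prop :=
  \sum_(j < n) `|z 0 j| ^+ 2 < delta ^+ 2.

Definition upper_tri (C : numClosedFieldType) (m : nat) (M : 'M[C]_m) : Prop :=
  forall a b : 'I_m, (b < a)%N -> M a b = 0.

(* the range of rho_{Z,w}: since rho(U) = 0 and the target is finite
   dimensional, it is the linear span of the rho(S_v), v a word *)
Definition in_range_rho (C : numClosedFieldType) (n k : nat)
  (Z : 'M[C]_(k.+1, n)) (delta : C) (w : seq 'I_n) (M : 'M[C]_k.+1) : Prop :=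
  exists (s : seq (seq 'I_n)) (c : seq C),
    M = \sum_(i < size s) c`_i *: rhoSw Z delta w (nth [::] s i).

Definition zpow (C : numClosedFieldType) (n : nat) (z : 'rV[C]_n)
  (v : seq 'I_n) : C := \prod_(j <- v) z 0 j.

(* Main.v *)
Require Import Defs.
From HB Require Import structures.
From mathcomp Require Import all_boot all_order all_algebra.
From mathcomp Require Import mpoly.
Import Order.TTheory GRing.Theory Num.Theory.
Local Open Scope ring_scope.
Set Implicit Arguments. Unset Strict Implicit.

Section W.
Variables (C : numClosedFieldType) (n k : nat) (Z : 'M[C]_(k.+1, n)) (delta : C) (w : seq 'I_n).

Definition Wp (M : 'M[C]_k.+1) := exists ps : seq (C * seq 'I_n),
  M = \sum_(p <- ps) p.1 *: rhoSw Z delta w p.2.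

Lemma rhoSw_cat u v : rhoSw Z delta w (u ++ v) = rhoSw Z delta w u * rhoSw Z delta w v.
Proof. by rewrite /rhoSw big_cat. Qed.

Lemma Wp_word v : Wp (rhoSw Z delta w v).
Proof. by exists [:: (1, v)]; rewrite big_seq1 scale1r. Qed.

Lemma Wp0 : Wp 0.
Proof. by exists [::]; rewrite big_nil. Qed.

Lemma WpD M N : Wp M -> Wp N -> Wp (M + N).
Proof. by move=> [p1 ->] [p2 ->]; exists (p1 ++ p2); rewrite big_cat. Qed.

Lemma WpZ a M : Wp M -> Wp (a *: M).
Proof.
move=> [p1 ->]; exists [seq (a * p.1, p.2) | p <- p1].
by rewrite big_map scaler_sumr; apply: eq_bigr => p _ /=; rewrite scalerA.
Qed.


Lemma WpM' M N : Wp M -> Wp N -> Wp (M * N).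
Proof.
move=> [p1 ->] [p2 ->].
exists [seq (p.1 * q.1, p.2 ++ q.2) | p <- p1, q <- p2].
rewrite big_allpairs_dep mulr_suml; apply: eq_bigr => p _.
rewrite mulr_sumr; apply: eq_bigr => q _ /=.
by rewrite rhoSw_cat -scalerAl -scalerAr scalerA.
Qed.

Lemma Wp_sum (I : Type) (r : seq I) P (F : I -> 'M_k.+1) :
  (forall i, Wp (F i)) -> Wp (\sum_(i <- r | P i) F i).
Proof. move=> H; apply: big_ind => //; [exact: Wp0 | exact: WpD]. Qed.

Lemma Wp_prod (I : Type) (r : seq I) P (F : I -> 'M_k.+1) :
  (forall i, Wp (F i)) -> Wp (\prod_(i <- r | P i) F i).
Proof.
move=> H; apply: big_ind => //; last exact: WpM'.
by have := Wp_word [::]; rewrite /rhoSw big_nil.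
Qed.

Lemma Wp_range M : Wp M <-> in_range_rho Z delta w M.
Proof.
split.
  move=> [ps ->]; exists (map snd ps), (map fst ps).
  rewrite (big_nth (0, [::])) big_mkord size_map.
  apply: eq_bigr => i _.
  by rewrite (nth_map (0, [::])) // (nth_map (0, [::])).
move=> [s [c ->]].
exists [seq (c`_i, nth [::] s i) | i <- iota 0 (size s)].
by rewrite big_map -(big_mkord xpredT (fun i => c`_i *: rhoSw Z delta w (nth [::] s i))) /index_iota subn0.
Qed.
End W.
Section M.
Variables (C : fieldType) (m : nat).
Implicit Types X : 'M[C]_m.+1.

Definition upper X := forall t s : 'I_m.+1, (s < t)%N -> X t s = 0.

Lemma mulE X Y t s : (X * Y) t s = \sum_u X t u * Y u s.
Proof. by rewrite -mulmxE mxE. Qed.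

Lemma prodR X (lam : nat -> C) : upper X ->
  (forall c, (c <= m)%N -> X (inord c) (inord c) = lam c) ->
  forall d m0, (m0 + d = m.+1)%N -> forall t s : 'I_m.+1, (m0 <= t)%N ->
  (\prod_(m0 <= c < m.+1) (X - lam c *: 1)) t s = 0.
Proof.
move=> uX dX; elim=> [|d IH] m0 Hm t s Ht.
  by move: (ltn_ord t); rewrite -[X in (_ < X)%N]Hm addn0 ltnNge Ht.
rewrite big_ltn; last by rewrite -Hm addnS ltnS leq_addr.
rewrite mulE big1 // => u _.
rewrite !mxE.
case: (ltngtP u t) => Hut.
- by rewrite (uX _ _ Hut) -val_eqE (gtn_eqF Hut) mulr0 subr0 mul0r.
- by rewrite (IH m0.+1) ?mulr0 // ?addSnnS // (leq_ltn_trans Ht Hut).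
- have -> : u = t by apply: val_inj.
  case: (ltngtP m0 t) Ht => // [Hlt|Heq] _.
    by rewrite (IH m0.+1) ?mulr0 // addSnnS.
  have Hle : (m0 <= m)%N by rewrite Heq -ltnS.
  rewrite eqxx mulr1 -dX //.
  have -> : t = inord m0 by apply: val_inj; rewrite /= inordK.
  by rewrite subrr mul0r.
Qed.

Lemma prodL X (lam : nat -> C) : upper X ->
  (forall c, (c <= m)%N -> X (inord c) (inord c) = lam c) ->
  forall m0, (m0 <= m.+1)%N -> forall t s : 'I_m.+1, (s < m0)%N ->
  (\prod_(0 <= c < m0) (X - lam c *: 1)) t s = 0.
Proof.
move=> uX dX; elim=> [|m0 IH] Hm t s Hs //.
rewrite big_nat_recr //= mulE big1 // => u _.
rewrite !mxE.
case: (ltngtP u s) => Hus.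
- by rewrite IH ?mul0r // ?(ltnW Hm) // (leq_trans Hus) // -ltnS.
- by rewrite (uX _ _ Hus) -val_eqE (gtn_eqF Hus) mulr0 subr0 mulr0.
- have -> : u = s by apply: val_inj.
  move: Hs; rewrite ltnS leq_eqVlt => /orP [/eqP Heq | Hlt]; last first.
    by rewrite IH ?mul0r // ltnW.
  have Hle : (m0 <= m)%N by rewrite -ltnS -Heq.
  rewrite eqxx mulr1 -dX //.
  have -> : s = inord m0 by apply: val_inj; rewrite /= inordK.
  by rewrite subrr mulr0.
Qed.

Lemma prod_row X (mu : nat -> C) (a : 'I_m.+1) (cs : seq nat) :
  (forall s, s != a -> X a s = 0) -> forall s,
  (\prod_(c <- cs) (X - mu c *: 1)) a s = (s == a)%:R * \prod_(c <- cs) (X a a - mu c).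
Proof.
move=> Xa; elim: cs => [|c cs IH] s.
  by rewrite !big_nil mxE eq_sym mulr1.
rewrite !big_cons mulE (bigD1 a) //= [X in _ + X]big1 => [|u Hu].
  rewrite addr0 IH !mxE eqxx mulr1; case: (s == a); rewrite ?mul1r ?mul0r ?mulr0 //.
by rewrite !mxE Xa // eq_sym (negbTE Hu) mulr0 subr0 mul0r.
Qed.

Lemma prod_col X (mu : nat -> C) (a : 'I_m.+1) (cs : seq nat) :
  (forall t, t != a -> X t a = 0) -> forall t,
  (\prod_(c <- cs) (X - mu c *: 1)) t a = (t == a)%:R * \prod_(c <- cs) (X a a - mu c).
Proof.
move=> Xa; elim: cs => [|c cs IH] t.
  by rewrite !big_nil mxE mulr1.
rewrite !big_cons mulE (bigD1 a) //= [X in _ + X]big1 => [|u Hu].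
  rewrite addr0 IH !mxE eqxx mul1r.
  case: (eqVneq t a) => [->|Hta]; rewrite ?eqxx ?mul1r ?mulr1 //.
  by rewrite (Xa t Hta) mulr0 subr0 !mul0r.
by rewrite IH (negbTE Hu) mul0r mulr0.
Qed.

End M.
Lemma mulE' (C : fieldType) m (X Y : 'M[C]_m.+1) t s : (X * Y) t s = \sum_u X t u * Y u s.
Proof. by rewrite -mulmxE mxE. Qed.

Section P.
Variables (C : fieldType) (m : nat) (I : Type) (F : I -> 'M[C]_m.+1).

Hypothesis bid : forall x (t s : 'I_m.+1), (s != t :> nat) -> (s != t.+1 :> nat) -> F x t s = 0.

Lemma band_prod vs : forall t s : 'I_m.+1, (t + size vs < s)%N -> (\prod_(x <- vs) F x) t s = 0.
Proof.
elim: vs => [|x vs IH] t s H.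
  by rewrite big_nil mxE; move: H; rewrite addn0 => H; rewrite -val_eqE (ltn_eqF H).
rewrite big_cons mulE' big1 // => u _.
case: (eqVneq (u : nat) t) => [Hu|Hu].
  by rewrite IH ?mulr0 // Hu; apply: leq_trans H; rewrite /= addnS.
case: (eqVneq (u : nat) t.+1) => [Hu'|Hu'].
  by rewrite IH ?mulr0 // Hu' addSn; rewrite /= addnS in H.
by rewrite bid // mul0r.
Qed.

Fixpoint pathprod (t : nat) (vs : seq I) : C :=
  if vs is x :: vs' then F x (inord t) (inord t.+1) * pathprod t.+1 vs' else 1.

Lemma top_prod vs : forall t s : 'I_m.+1, (s = t + size vs :> nat)%N ->
  (\prod_(x <- vs) F x) t s = pathprod t vs.
Proof.
elim: vs => [|x vs IH] t s H.
  by rewrite big_nil mxE /=; move: H; rewrite addn0 => H; rewrite (_ : s = t) ?eqxx //; apply: val_inj.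
have Ht1 : (t.+1 < m.+1)%N.
  by apply: leq_ltn_trans (ltn_ord s); rewrite H /= addnS ltnS leq_addr.
rewrite big_cons mulE' (bigD1 (Ordinal Ht1)) //= [X in _ + X]big1 => [|u Hu].
  rewrite addr0 (IH (Ordinal Ht1) s) /=; last by rewrite H addnS.
  by congr (_ * _); congr (F x _ _); apply: val_inj; rewrite /= inordK // ltnW.
case: (eqVneq (u : nat) t) => [Hu'|Hu'].
  by rewrite band_prod ?mulr0 // Hu' H /= addnS.
by rewrite bid ?mul0r //.
Qed.

Hypothesis sbid : forall x (t s : 'I_m.+1), (s != t.+1 :> nat) -> F x t s = 0.

Lemma strict_prod vs : forall t s : 'I_m.+1, (s != (t + size vs)%N :> nat) -> (\prod_(x <- vs) F x) t s = 0.
Proof.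
elim: vs => [|x vs IH] t s H.
  by rewrite big_nil mxE; move: H; rewrite addn0 => H; rewrite -val_eqE eq_sym (negbTE H).
rewrite big_cons mulE' big1 // => u _.
case: (eqVneq (u : nat) t.+1) => [Hu'|Hu'].
  by rewrite IH ?mulr0 // Hu' addSn; rewrite /= addnS in H.
by rewrite sbid // mul0r.
Qed.
End P.

Section U.
Variables (C : fieldType) (m : nat) (I : Type) (F : I -> 'M[C]_m.+1).
Definition upperM (X : 'M[C]_m.+1) := forall t s : 'I_m.+1, (s < t)%N -> X t s = 0.
Hypothesis up : forall x, upperM (F x).

Lemma upper_prod vs : upperM (\prod_(x <- vs) F x) /\
  forall t, (\prod_(x <- vs) F x) t t = \prod_(x <- vs) F x t t.
Proof.
elim: vs => [|x vs [IH1 IH2]].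
  split => [t s H|t]; rewrite big_nil mxE ?eqxx //.
    by rewrite -val_eqE (gtn_eqF H).
  by rewrite big_nil.
rewrite !big_cons; split => [t s H|t].
  rewrite mulE' big1 // => u _.
  case: (ltnP u t) => Hu; first by rewrite up ?mul0r.
  by rewrite IH1 ?mulr0 // (leq_trans H Hu).
rewrite mulE' (bigD1 t) //= [X in _ + X]big1 ?addr0 ?IH2 ?big_cons // => u Hu.
case: (ltngtP u t) => Hut; first by rewrite up ?mul0r.
  by rewrite IH1 ?mulr0.
by case/eqP: Hu; apply: val_inj.
Qed.
End U.

Section D.
Variables (C : numClosedFieldType) (n k : nat) (Z : 'M[C]_(k.+1, n)) (delta : C) (w : seq 'I_n).
Hypothesis Hk : size w = k.

Local Notation X := (rhoS Z delta w).

Lemma rhoS_up x : upperM (X x).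
Proof.
move=> t s H; rewrite mxE -val_eqE (gtn_eqF H).
by rewrite (_ : (s == t.+1 :> nat) = false) ?addr0 //; apply: ltn_eqF; apply: ltn_trans H _.
Qed.

Lemma rhoS_diag x (t : 'I_k.+1) : X x t t = Z t x.
Proof. by rewrite mxE eqxx (_ : (t == t.+1 :> nat) = false) ?addr0 // ltn_eqF. Qed.

Lemma rhoS_bid x (t s : 'I_k.+1) : (s != t :> nat) -> (s != t.+1 :> nat) -> X x t s = 0.
Proof.
move=> H1 H2; rewrite mxE -val_eqE eq_sym (negbTE H1) (negbTE H2) /= addr0 //.
Qed.

Lemma rhoS_sup x t : (t < k)%N ->
  X x (inord t) (inord t.+1) = if nth x w t == x then 1 - delta else 0.
Proof.
move=> Ht; rewrite mxE -val_eqE /= !inordK ?ltnS // ?(ltnW Ht) //.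
by rewrite (_ : (t == t.+1) = false) ?eqxx ?add0r // ltn_eqF.
Qed.

Lemma path_w v : forall t, (t + size v <= k)%N ->
  pathprod X t v = if v == take (size v) (drop t w) then (1 - delta) ^+ size v else 0.
Proof.
elim: v => [|x v IH] t H /=; first by rewrite take0 eqxx expr0.
have Ht : (t < k)%N by apply: leq_trans H; rewrite addnS ltnS leq_addr.
rewrite (drop_nth x) ?Hk //= eqseq_cons rhoS_sup // IH; last by rewrite addSn -addnS.
rewrite [nth x w t == x]eq_sym.
case: (x == nth x w t); case: (v == _); rewrite /= ?mul0r ?mulr0 //.
by rewrite exprS.
Qed.

Lemma part1a : rhoSw Z delta w w ord0 ord_max = (1 - delta) ^+ k.
Proof.
rewrite /rhoSw (top_prod rhoS_bid) /=; last by rewrite Hk.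
by rewrite path_w ?drop0 ?take_size ?eqxx // Hk.
Qed.

Lemma part1b v : (size v <= k)%N -> v != w -> rhoSw Z delta w v ord0 ord_max = 0.
Proof.
move=> H1 H2; rewrite /rhoSw.
move: H1; rewrite leq_eqVlt => /orP [/eqP Hv | Hv].
  rewrite (top_prod rhoS_bid) /=; last by rewrite Hv.
  rewrite path_w ?drop0; last by rewrite Hv.
  by rewrite Hv -Hk take_size (negbTE H2).
by rewrite (band_prod rhoS_bid).
Qed.

Lemma part3b (i : 'I_k.+1) (v : seq 'I_n) : rhoSw Z delta w v i i = zpow (row i Z) v.
Proof.
rewrite /rhoSw (proj2 (upper_prod rhoS_up v)) /zpow.
by apply: eq_bigr => x _; rewrite rhoS_diag mxE.
Qed.

End D.

Section Poly.
Variables (C : numClosedFieldType) (n k : nat) (delta : C) (w : seq 'I_n).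
Local Notation R := {mpoly C[k.+1 * n]}.

Definition rhoSP (x : 'I_n) : 'M[R]_k.+1 :=
  \matrix_(a, b)
    ((if a == b then 'X_(mxvec_index a x) else 0) +
     (if (nat_of_ord b == (nat_of_ord a).+1) && (nth x w a == x)
      then 1 - delta%:MP else 0)).

Lemma eval_rhoSP (Z : 'M[C]_(k.+1, n)) x :
  map_mx (meval (fun t => mxvec Z 0 t)) (rhoSP x) = rhoS Z delta w x.
Proof.
apply/matrixP => a b; rewrite !mxE mevalD.
congr (_ + _).
  by case: (a == b); rewrite ?meval0 // mevalXU mxvecE.
by case: (_ && _); rewrite ?meval0 // mevalB meval1 mevalC.
Qed.

Lemma eval_prod (Z : 'M[C]_(k.+1, n)) v :
  map_mx (meval (fun t => mxvec Z 0 t)) (\prod_(x <- v) rhoSP x) = rhoSw Z delta w v.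
Proof.
elim: v => [|x v IH]; rewrite /rhoSw ?big_nil ?big_cons.
  by apply/matrixP => a b; rewrite !mxE; case: (a == b); rewrite /= ?meval1 ?meval0.
by rewrite -!mulmxE map_mxM eval_rhoSP IH.
Qed.

Lemma part2 v : (k < size v)%N ->
  exists F : R, F.@[fun _ => 0] = 0 /\
    forall Z : 'M[C]_(k.+1, n), rhoSw Z delta w v ord0 ord_max = F.@[fun t => mxvec Z 0 t].
Proof.
move=> Hv; exists ((\prod_(x <- v) rhoSP x) ord0 ord_max); split; last first.
  by move=> Z; rewrite -eval_prod mxE.
rewrite (meval_eq _ (v2 := fun t => mxvec (0 : 'M[C]_(k.+1, n)) 0 t)); last first.
  by move=> t; rewrite linear0 mxE.
move/matrixP: (eval_prod 0 v) => /(_ ord0 ord_max); rewrite mxE => ->.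
rewrite /rhoSw (strict_prod (m := k)) //.
  move=> x t s Hs; rewrite mxE mxE (_ : (s == t.+1 :> nat) = false) ?addr0.
    by case: (t == s).
  exact/negbTE.
by rewrite add0n /= neq_ltn Hv.
Qed.
End Poly.

Lemma dXd (C : fieldType) m (X : 'M[C]_m.+1) (a b : 'I_m.+1) :
  delta_mx a a * X * delta_mx b b = X a b *: delta_mx a b.
Proof.
apply/matrixP => t s; rewrite mulE' (bigD1 b) //= [Y in _ + Y = _]big1 => [|u Hu].
  rewrite mulE' (bigD1 a) //= [Y in (_ + Y) * _]big1 => [|u Hu].
    rewrite !mxE !eqxx !addr0.
    by case: (t == a); case: (s == b); rewrite /= ?mul0r ?mulr0 ?mul1r ?mulr1.
  by rewrite [delta_mx a a _ _]mxE (negbTE Hu) andbF mul0r.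
by rewrite [delta_mx b b _ _]mxE (negbTE Hu) mulr0.
Qed.

Section P3.
Variables (C : numClosedFieldType) (n k : nat) (Z : 'M[C]_(k.+1, n)) (delta : C) (w : seq 'I_n).
Hypothesis Hk : size w = k.
Hypothesis Hn : (2 <= n)%N.
Hypothesis Hd : delta < 1.
Hypothesis inj : injective (fun ij : 'I_k.+1 * 'I_n => Z ij.1 ij.2).

Local Notation X := (rhoS Z delta w).
Local Notation W := (Wp Z delta w).

Definition i0 : 'I_n := Ordinal (ltn_trans (ltnSn 0) Hn).
Definition i1 : 'I_n := Ordinal Hn.
Definition jo (x : 'I_n) : 'I_n := if x == i0 then i1 else i0.
Lemma jo_neq x : jo x != x.
Proof.
rewrite /jo; case: (eqVneq x i0) => [->|H]; last by rewrite eq_sym.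
by rewrite -val_eqE.
Qed.

Lemma W_fac j (c : C) : W (X j - c *: 1).
Proof.
have -> : X j - c *: 1 = rhoSw Z delta w [:: j] + (- c) *: rhoSw Z delta w [::].
  by rewrite /rhoSw big_seq1 big_nil scaleNr.
by apply: WpD; [apply: Wp_word | apply: WpZ; apply: Wp_word].
Qed.

Lemma Zneq (a c : 'I_k.+1) j : a != c -> Z a j - Z c j != 0.
Proof.
move=> H; rewrite subr_eq0; apply: contra H => /eqP E.
by have /(_ E) := @inj (a, j) (c, j); case=> ->.
Qed.

Lemma W_diag (a : 'I_k.+1) : W (delta_mx a a).
Proof.
set jR := jo (nth i0 w a).
set jL := jo (nth i0 w a.-1).
set R := \prod_(a.+1 <= c < k.+1) (X jR - Z (inord c) jR *: 1).
set L := \prod_(0 <= c < a) (X jL - Z (inord c) jL *: 1).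
set cR := \prod_(c <- index_iota a.+1 k.+1) (X jR a a - Z (inord c) jR).
set cL := \prod_(c <- index_iota 0 a) (X jL a a - Z (inord c) jL).
have dR : forall c, (c <= k)%N -> X jR (inord c) (inord c) = Z (inord c) jR.
  by move=> c _; rewrite rhoS_diag.
have dL : forall c, (c <= k)%N -> X jL (inord c) (inord c) = Z (inord c) jL.
  by move=> c _; rewrite rhoS_diag.
have Rrows : forall t s : 'I_k.+1, (a < t)%N -> R t s = 0.
  move=> t s Ht; apply: (prodR (rhoS_up _ _ _ _) dR (d := k - a)) => //.
  by rewrite addSn subnKC // -ltnS.
have Lcols : forall t s : 'I_k.+1, (s < a)%N -> L t s = 0.
  by move=> t s Hs; apply: (prodL (rhoS_up _ _ _ _) dL) => //; apply: ltnW.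
have Rrow : forall s, R a s = (s == a)%:R * cR.
  apply: prod_row => s Hs; rewrite mxE eq_sym (negbTE Hs) add0r.
  case Hs1 : (s == a.+1 :> nat) => //=.
  have Ha : (a < size w)%N by rewrite Hk -ltnS -(eqP Hs1).
  by rewrite (set_nth_default i0) // /jR eq_sym (negbTE (jo_neq _)).
have Lcol : forall t, L t a = (t == a)%:R * cL.
  apply: prod_col => t Ht; rewrite mxE (negbTE Ht) add0r.
  case Ht1 : (a == t.+1 :> nat) => //=.
  have Ht2 : (t < size w)%N by rewrite Hk -ltnS -(eqP Ht1).
  by rewrite (set_nth_default i0) // /jL (eqP Ht1) /= eq_sym (negbTE (jo_neq _)).
have LR : L * R = (cL * cR) *: delta_mx a a.
  apply/matrixP => t s; rewrite mulE' (bigD1 a) //= [Y in _ + Y]big1 => [|u Hu].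
    rewrite addr0 Rrow Lcol !mxE.
    by case: (t == a); case: (s == a); rewrite /= ?mul0r ?mulr0 ?mul1r ?mulr1 // mulrA.
  case: (ltngtP u a) => Hua; first by rewrite Lcols ?mul0r.
    by rewrite Rrows ?mulr0.
  by case/eqP: Hu; apply: val_inj.
have cne : cL * cR != 0.
  apply: mulf_neq0; rewrite prodf_seq_neq0; apply/allP => c; rewrite mem_index_iota => /andP [H1 H2] /=.
    rewrite rhoS_diag Zneq //; apply/eqP => E.
    have Hc : (c < k.+1)%N by apply: ltn_trans H2 _.
    by move: H2; rewrite E inordK // ltnn.
  rewrite rhoS_diag Zneq //; apply/eqP => E.
  by move: H1; rewrite E inordK // ltnn.
have -> : delta_mx a a = (cL * cR)^-1 *: (L * R) by rewrite LR scalerA mulVf ?scale1r.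
apply: WpZ; apply: WpM'; apply: Wp_prod => c; exact: W_fac.
Qed.

Lemma W_sup (c : 'I_k.+1) (b : 'I_k.+1) : (b = c.+1 :> nat) -> W (delta_mx c b).
Proof.
move=> Hb.
have Hc : (c < size w)%N by rewrite Hk -ltnS -Hb.
have Hne : 1 - delta != 0 by rewrite subr_eq0 eq_sym lt_eqF.
have E : X (nth i0 w c) c b = 1 - delta.
  rewrite mxE -val_eqE /= Hb eqxx /= ltn_eqF // (set_nth_default i0) // eqxx add0r //.
have -> : delta_mx c b = (1 - delta)^-1 *: (delta_mx c c * X (nth i0 w c) * delta_mx b b).
  by rewrite dXd E scalerA mulVf ?scale1r.
apply: WpZ; apply: WpM'; first apply: WpM'; try exact: W_diag.
by have := Wp_word Z delta w [:: nth i0 w c]; rewrite /rhoSw big_seq1.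
Qed.

Lemma W_delta d : forall (a b : 'I_k.+1), (b = a + d :> nat)%N -> W (delta_mx a b).
Proof.
elim: d => [|d IH] a b Hb.
  have -> : b = a by apply: val_inj; rewrite /= Hb addn0.
  exact: W_diag.
have Hd' : (a + d < k.+1)%N by apply: leq_ltn_trans (ltn_ord b); rewrite Hb addnS.
have -> : delta_mx a b = delta_mx a (Ordinal Hd') * delta_mx (Ordinal Hd') b.
  by symmetry; exact: mul_delta_mx.
apply: WpM'; first exact: IH.
by apply: W_sup; rewrite Hb /= addnS.
Qed.

Lemma W_upper M : upperM M -> W M.
Proof.
move=> HM; rewrite (matrix_sum_delta M); apply: Wp_sum => a; apply: Wp_sum => b.
case: (leqP a b) => H.
  by apply: WpZ; apply: (W_delta (d := b - a)); rewrite subnKC.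
by rewrite HM // scale0r; exact: Wp0.
Qed.

End P3.

Unset Implicit Arguments.

Theorem lemma4p3 (C : numClosedFieldType) (n k : nat) (w : seq 'I_n)
  (delta : C) :
  (2 <= n)%N -> size w = k -> (2 <= k)%N -> 0 <= delta -> delta < 1 ->
  [/\
   (* entries (1,k+1) for words of length <= k *)
   (forall Z : 'M[C]_(k.+1, n), (forall i, in_dball delta (row i Z)) ->
      rhoSw Z delta w w ord0 ord_max = (1 - delta) ^+ k /\
      (forall v : seq 'I_n, (size v <= k)%N -> v != w ->
         rhoSw Z delta w v ord0 ord_max = 0)),
   (* words of length > k : an (analytic, here polynomial) F_v with F_v(0)=0 *)
   (forall v : seq 'I_n, (k < size v)%N ->
      exists F : {mpoly C[k.+1 * n]},
        F.@[fun _ => 0] = 0 /\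
        forall Z : 'M[C]_(k.+1, n), (forall i, in_dball delta (row i Z)) ->
          rhoSw Z delta w v ord0 ord_max = F.@[fun t => mxvec Z 0 t]) &
   (* distinct coordinates : range is T_{k+1}, and rho is in N_{Z,k+1} *)
   (forall Z : 'M[C]_(k.+1, n), (forall i, in_dball delta (row i Z)) ->
      injective (fun ij : 'I_k.+1 * 'I_n => Z ij.1 ij.2) ->
      (forall M : 'M[C]_k.+1, in_range_rho Z delta w M <-> upper_tri M) /\
      (forall (i : 'I_k.+1) (v : seq 'I_n),
         rhoSw Z delta w v i i = zpow (row i Z) v))].
Proof.
move=> Hn Hk Hk2 Hd0 Hd1; split.
- move=> Z _; split; first exact: part1a.
  by move=> v; apply: part1b.
- move=> v Hv; have [F [H1 H2]] := part2 delta w Hv.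
  by exists F; split=> // Z _; apply: H2.
- move=> Z _ inj; split; last by move=> i v; apply: part3b.
  move=> M; rewrite -Wp_range; split.
    move=> [ps ->]; apply: (big_ind (fun M : 'M[C]_k.+1 => upperM M)).
    + by move=> t s _; rewrite mxE.
    + by move=> A B HA HB t s H; rewrite mxE HA ?HB ?addr0.
    + move=> p _ t s H; rewrite mxE.
      by rewrite (proj1 (upper_prod (@rhoS_up C n k Z delta w) p.2)) ?mulr0.
  by move=> HM; apply: (W_upper Hk Hn Hd1 inj).
Qed.
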